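(* For 3-Majority or 2-Choices, for every $t\ge1$ the following hold. (i) For every opinion $i$, conditioned on $\mathcal F_{t-1}$, the random variable $\alpha_t(i)-\mathbb E_{t-1}[\alpha_t(i)]$ satisfies the $(1/n,s)$-Bernstein condition, where - $s=\alpha_{t-1}(i)/n$ for 3-Majority; - $s=\alpha_{t-1}(i)(\alpha_{t-1}(i)+\gamma_{t-1})/n$ for 2-Choices. (ii) For distinct opinions $i,j$, conditioned on $\mathcal F_{t-1}$, the random variable $\delta_t(i,j)-\mathbb E_{t-1}[\delta_t(i,j)]$ satisfies the $(2/n,s)$-Bernstein condition, where - $s=\frac2n(\alpha_{t-1}(i)+\alpha_{t-1}(j))$ for 3-Majority; - $s=\frac1n(\alpha_{t-1}(i)+\alpha_{t-1}(j))(\alpha_{t-1}(i)+\alpha_{t-1}(j)+\gamma_{t-1})$ for 2-Choices. (iii) Conditioned on $\mathcal F_{t-1}$, the random variable $\gamma_{t-1}-\gamma_t$ satisfies the one-sided $(2\sqrt{\gamma_{t-1}}/n,\,s)$-Bernstein condition, where - $s=\frac4n\gamma_{t-1}^{1.5}$ for 3-Majority; - $s=\frac8n\gamma_{t-1}^2$ for 2-Choices.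
   Context: **Setting.** Let $V$ be a set of $n$ vertices and $k\in\{1,\dots,n\}$. A configuration is a map $\mathsf{opn}\colon V\to[k]$. The process is synchronous: each round $t\ge1$ produces $\mathsf{opn}_t$ from $\mathsf{opn}_{t-1}$, and all vertices make their choices independently. **3-Majority.** Each vertex $v$ samples $w_1,w_2,w_3\in V$ independently and uniformly, with replacement. It sets $\mathsf{opn}_t(v)=\mathsf{opn}_{t-1}(w_1)$ if $\mathsf{opn}_{t-1}(w_1)=\mathsf{opn}_{t-1}(w_2)$, and $\mathsf{opn}_t(v)=\mathsf{opn}_{t-1}(w_3)$ otherwise. **2-Choices.** Each vertex $v$ samples $w_1,w_2\in V$ independently and uniformly, with replacement. It sets $\mathsf{opn}_t(v)=\mathsf{opn}_{t-1}(w_1)$ if $\mathsf{opn}_{t-1}(w_1)=\mathsf{opn}_{t-1}(w_2)$, and $\mathsf{opn}_t(v)=\mathsf{opn}_{t-1}(v)$ otherwise. **Basic quantities.** - $\alpha_t(i)=|\{v:\mathsf{opn}_t(v)=i\}|/n$. - $\gamma_t=\sum_{i\in[k]}\alpha_t(i)^2$. - $\delta_t(i,j)=\alpha_t(i)-\alpha_t(j)$. **Conditioning.** $\mathcal F_t$ is generated by $\mathsf{opn}_0,\dots,\mathsf{opn}_t$, and $\mathbb E_{t-1}[\cdot]=\mathbb E[\cdot\mid\mathcal F_{t-1}]$. **Bernstein conditions.** Let $D,s\ge0$. - $X$ satisfies the $(D,s)$-Bernstein condition if $\mathbb E[e^{\lambda X}]\le\exp\big(\frac{\lambda^2 s/2}{1-|\lambda|D/3}\big)$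 for all real $\lambda$ with $|\lambda|D<3$. - It satisfies the one-sided $(D,s)$-Bernstein condition if this holds for all $\lambda\ge0$ with $\lambda D<3$. - Conditioned on $\mathcal F_{t-1}$, these are required with conditional expectations, almost surely. *)

(* Defs.v *)
From mathcomp Require Import all_boot all_order all_algebra.
From mathcomp Require Import all_classical all_reals all_analysis.
Set Implicit Arguments. Unset Strict Implicit. Unset Printing Implicit Defensive.
Import Order.TTheory GRing.Theory Num.Theory.
Local Open Scope ring_scope.

(* Vertices V = 'I_n, opinions [k] = 'I_k; a configuration is opn : V -> [k]. *)
Definition config (n k : nat) := {ffun 'I_n -> 'I_k}.

Section Defs.
Variable R : realType.
Variables n k : nat.

Definition alpha (c : config n k) (i : 'I_k) : R :=
  #|[set v | c v == i]|%:R / n%:R.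

Definition gamma (c : config n k) : R := \sum_(i < k) alpha c i ^+ 2.

Definition delta (c : config n k) (i j : 'I_k) : R := alpha c i - alpha c j.

Definition step3 (c : config n k) (om : {ffun 'I_n -> 'I_n * 'I_n * 'I_n})
  : config n k :=
  [ffun v => let: (w1, w2, w3) := om v in
             if c w1 == c w2 then c w1 else c w3].

Definition step2 (c : config n k) (om : {ffun 'I_n -> 'I_n * 'I_n})
  : config n k :=
  [ffun v => let: (w1, w2) := om v in
             if c w1 == c w2 then c w1 else c v].

(* Expectation w.r.t. the uniform distribution on a finite type.  The uniform
   distribution on {ffun 'I_n -> S} is exactly "every vertex samples
   independently and uniformly (with replacement)". *)
Definition Eunif (T : finType) (f : T -> R) : R :=
  (\sum_(x : T) f x) / #|T|%:R.

(* Conditional expectation E_{t-1}[f(opn_t)] given opn_{t-1} = c. *)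
Definition E3 (c : config n k) (f : config n k -> R) : R :=
  Eunif (fun om : {ffun 'I_n -> 'I_n * 'I_n * 'I_n} => f (step3 c om)).
Definition E2 (c : config n k) (f : config n k -> R) : R :=
  Eunif (fun om : {ffun 'I_n -> 'I_n * 'I_n} => f (step2 c om)).

Definition bernstein (E : (config n k -> R) -> R) (X : config n k -> R)
  (D s : R) : Prop :=
  forall lam : R, `|lam| * D < 3 ->
    E (fun c' => expR (lam * X c')) <= expR ((lam ^+ 2 * s / 2) / (1 - `|lam| * D / 3)).

Definition bernstein1 (E : (config n k -> R) -> R) (X : config n k -> R)
  (D s : R) : Prop :=
  forall lam : R, 0 <= lam -> lam * D < 3 ->
    E (fun c' => expR (lam * X c')) <= expR ((lam ^+ 2 * s / 2) / (1 - lam * D / 3)).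

End Defs.

Arguments alpha {R n k} c i.
Arguments gamma {R n k} c.
Arguments delta {R n k} c i j.

(* Main.v *)
Require Import Defs.
From mathcomp Require Import all_boot all_order all_algebra.
From mathcomp Require Import all_classical all_reals all_analysis.
From mathcomp Require Import ring lra.
Import Order.TTheory GRing.Theory Num.Theory.
Local Open Scope ring_scope.

(* c plays the role of opn_{t-1}; E3 c / E2 c is the conditional law of opn_t
   given F_{t-1} (Markov property).  Every configuration can occur as
   opn_{t-1} (e.g. t = 1, opn_0 arbitrary). *)
Section ExpBounds.
Variable R : realType.

Lemma expR_up3 (x : R) : 0 <= x -> x < 3 ->
  expR x <= 1 + x + x ^+ 2 / (2 * (1 - x / 3)).
Proof.
move=> x0 x3.
have r1 : 0 < 1 - x / 3 by lra.
set C := 1 + x + _.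
pose S m := \sum_(0 <= i < m) x ^+ i / i`!%:R.
have T d : S d.+2 + x ^+ d.+2 / d.+2`!%:R / (1 - x / 3) <= C.
  elim: d => [|d IH].
    rewrite /S !big_nat_recr //= big_nil add0r expr0 expr1 fact0 /= !divr1.
    rewrite /C. have -> : (2`!%:R : R) = 2 by []. 
    by rewrite invfM mulrA.
  apply: le_trans IH.
  rewrite /S big_nat_recr //= -addrA lerD2l.
  set a := x ^+ d.+2 / d.+2`!%:R.
  have a0 : 0 <= a by rewrite divr_ge0 // exprn_ge0.
  have -> : x ^+ d.+3 / d.+3`!%:R = a * (x / d.+3%:R).
    rewrite /a exprS factS natrM invfM; field.
    by rewrite -natrD !pnatr_eq0 /= -lt0n fact_gt0.
  have N3 : x / d.+3%:R <= x / 3.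
    apply: ler_wpM2l => //. rewrite lef_pV2 ?posrE //; first by rewrite ler_nat.
  have : a * (x / d.+3%:R) <= a * (x / 3) by apply: ler_wpM2l.
  move: (x / d.+3%:R) => y H.
  rewrite ler_pdivlMr //.
  rewrite mulrDl divfK ?gt_eqF //.
  nra.
have C1 : 1 + x <= C.
  rewrite /C lerDl divr_ge0 // ?sqr_ge0 //; lra.
rewrite /expR; apply: limr_le; first exact: is_cvg_series_exp_coeff.
apply: nearW => -[|[|d]].
- rewrite /series /= big_geq //; lra.
- rewrite /series /= big_nat1 /exp_coeff /= expr0 fact0 divr1; lra.
- apply: le_trans (T d); rewrite /series /S /exp_coeff /= lerDl.
  by rewrite !divr_ge0 ?exprn_ge0 // ltW.
Qed.


Lemma expR_low4 (x : R) : 0 <= x -> 1 + x + x^+2/2 + x^+3/6 <= expR x.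
Proof.
move=> x0; have H := @nondecreasing_cvgn_le R (series (exp_coeff x)) _ (is_cvg_series_exp_coeff x) 4.
apply: le_trans (H _); last first.
  apply: (@nondecreasing_series R (exp_coeff x) xpredT 0) => m _ _.
  by rewrite /exp_coeff /= divr_ge0 // exprn_ge0.
rewrite /series /exp_coeff /= !big_nat_recr //= big_nil /= add0r.
have -> : (3`!%:R : R) = 6 by rewrite /factorial /= !natrM //=.
by rewrite expr0 expr1 fact0 /= ?divr1 //.
Qed.

Lemma expR_neg2 (y : R) : y <= 0 -> expR y <= 1 + y + y ^+ 2 / 2.
Proof.
move=> y0.
have H := @expR_low4 (- y) ltac:(lra).
have E : expR y * expR (- y) = 1 by rewrite expRxMexpNx_1.
have ey := expR_gt0 y.
set e := expR (- y) in H E.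
set P := 1 + y + y ^+ 2 / 2.
have P0 : 0 < P by rewrite /P; nra.
have PL : 1 <= P * (1 + - y + (- y) ^+ 2 / 2 + (- y) ^+ 3 / 6).
  have h3 : 0 <= (- y) ^+ 3 by rewrite exprn_ge0 //; lra.
  rewrite /P; nra.
have : 1 <= P * e by apply: le_trans PL _; rewrite ler_wpM2l // ltW.
nra.
Qed.

Lemma expR_quad (y B : R) : 0 <= B -> B < 3 -> y <= B ->
  expR y <= 1 + y + y ^+ 2 / (2 * (1 - B / 3)).
Proof.
move=> B0 B3 yB.
have b1 : 0 < 1 - B / 3 by lra.
have b2 : 1 - B / 3 <= 1 by lra.
have y2 := sqr_ge0 y.
case: (leP y 0) => y0.
  apply: (le_trans (@expR_neg2 y y0)); rewrite lerD2l.
  rewrite invfM mulrA ler_pdivlMr //. have : 0 <= y ^+ 2 / 2 by lra. move: (y ^+ 2 / 2) => a ha; nra.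
apply: (le_trans (@expR_up3 y (ltW y0) (le_lt_trans yB B3))).
rewrite lerD2l ler_wpM2l // lef_pV2 ?posrE ?mulr_gt0 //; try lra.
Qed.

End ExpBounds.

Section Unif.
Variable R : realType.

Lemma Eunif_prod (n : nat) (S : finType) (F : 'I_n -> S -> R) :
  Eunif (fun om : {ffun 'I_n -> S} => \prod_v F v (om v)) =
  \prod_v Eunif (F v).
Proof.
rewrite /Eunif big_split /= prodr_const card_ord.
rewrite -(bigA_distr_bigA (fun v s => F v s)) card_ffun card_ord.
by rewrite natrX exprVn.
Qed.

Lemma Eunif_sum (T : finType) (I : finType) (f : I -> T -> R) :
  Eunif (fun x => \sum_i f i x) = \sum_i Eunif (f i).
Proof.
rewrite /Eunif exchange_big /= mulr_suml. by [].
Qed.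

Lemma EunifZ (T : finType) (f : T -> R) (a : R) :
  Eunif (fun x => f x * a) = Eunif f * a.
Proof. by rewrite /Eunif -mulr_suml mulrAC. Qed.

Lemma Eunif_cst (T : finType) a : (0 < #|T|)%N -> Eunif (fun _ : T => a : R) = a.
Proof.
move=> hT; rewrite /Eunif sumr_const -[a *+ _]mulr_natr (_ : #|xpredT| = #|T|) // mulfK //.
by rewrite pnatr_eq0 -lt0n.
Qed.

Lemma Eunif_le (T : finType) (f g : T -> R) :
  (forall x, f x <= g x) -> Eunif f <= Eunif g.
Proof.
move=> fg; rewrite /Eunif ler_wpM2r ?invr_ge0 ?ler0n //.
by apply: ler_sum => x _.
Qed.

Lemma Eunif_marg (n : nat) (S : finType) (v : 'I_n) (f : S -> R) :
  (0 < #|S|)%N ->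
  Eunif (fun om : {ffun 'I_n -> S} => f (om v)) = Eunif f.
Proof.
move=> hS.
pose F u s := if u == v then f s else 1.
have -> : (fun om : {ffun 'I_n -> S} => f (om v)) =
          (fun om => \prod_u F u (om u)).
  apply: funext => om; rewrite (bigD1 v) //= /F eqxx big1 ?mulr1 //.
  by move=> u /negbTE ->.
rewrite Eunif_prod (bigD1 v) //= /F eqxx big1 ?mulr1 //.
move=> u /negbTE uv; rewrite uv; exact: Eunif_cst.
Qed.

End Unif.

Section Dist.
Variable R : realType.

Lemma var_le (I : finType) (P g : I -> R) (t : R) :
  \sum_i P i = 1 ->
  \sum_i P i * (g i - \sum_j P j * g j) ^+ 2 <= \sum_i P i * (g i - t) ^+ 2.
Proof.
move=> P1; set m := \sum_j P j * g j.
have e i : P i * (g i - t) ^+ 2 =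
   P i * (g i - m) ^+ 2 + 2 * (m - t) * (P i * g i) - 2 * (m - t) * m * P i
   + (m - t) ^+ 2 * P i by ring.
rewrite (eq_bigr _ (fun i _ => e i)) !big_split /= -!mulr_sumr P1 -/m.
rewrite sumrN -mulr_sumr P1; have := sqr_ge0 (m - t); lra.
Qed.

Lemma var_eq (I : finType) (P g : I -> R) :
  \sum_i P i = 1 ->
  \sum_i P i * (g i - \sum_j P j * g j) ^+ 2 =
  \sum_i P i * g i ^+ 2 - (\sum_j P j * g j) ^+ 2.
Proof.
move=> P1; set m := \sum_j P j * g j.
have e i : P i * (g i - m) ^+ 2 =
   P i * g i ^+ 2 - 2 * m * (P i * g i) + m ^+ 2 * P i by ring.
rewrite (eq_bigr _ (fun i _ => e i)) !big_split /= -!mulr_sumr P1 -/m.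
rewrite ?sumrN -?mulr_sumr ?P1 -/m; ring.
Qed.

Lemma mgf_dist (I : finType) (P g : I -> R) (lam B : R) :
  (forall i, 0 <= P i) -> \sum_i P i = 1 -> 0 <= B -> B < 3 ->
  (forall i, lam * (g i - \sum_j P j * g j) <= B) ->
  \sum_i P i * expR (lam * g i) <=
  expR (lam * (\sum_j P j * g j) +
        lam ^+ 2 * (\sum_i P i * (g i - \sum_j P j * g j) ^+ 2) / (2 * (1 - B / 3))).
Proof.
move=> P0 P1 B0 B3 hB.
set m := \sum_j P j * g j; set V := \sum_i P i * (g i - m) ^+ 2.
set K := 2 * (1 - B / 3).
have -> : \sum_i P i * expR (lam * g i) =
          expR (lam * m) * \sum_i P i * expR (lam * (g i - m)).
  rewrite mulr_sumr; apply: eq_bigr => i _.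
  by rewrite mulrCA -expRD; congr (_ * expR _); ring.
rewrite expRD ler_wpM2l ?expR_ge0 //.
apply: le_trans (expR_ge1Dx _).
apply: (@le_trans _ _ (\sum_i P i * (1 + lam * (g i - m) + (lam * (g i - m)) ^+ 2 / K))).
  apply: ler_sum => i _; apply: ler_wpM2l => //; exact: expR_quad.
have e i : P i * (1 + lam * (g i - m) + (lam * (g i - m)) ^+ 2 / K) =
   P i + lam * (P i * g i) - lam * m * P i + lam ^+ 2 / K * (P i * (g i - m) ^+ 2)
   by ring.
rewrite (eq_bigr _ (fun i _ => e i)) !big_split /= -!mulr_sumr P1 -/m -/V.
rewrite sumrN -mulr_sumr P1.
suff -> : 1 + lam * m + - (lam * m * 1) + lam ^+ 2 / K * V = 1 + lam ^+ 2 * V / K by [].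
ring.
Qed.

End Dist.

Section Basic.
Variable R : realType.
Variables n k : nat.
Hypothesis hn : (0 < n)%N.
Variable c : config n k.

Local Notation a := (@alpha R n k c).

Lemma n_neq0 : (n%:R : R) != 0.
Proof. by rewrite pnatr_eq0 -lt0n. Qed.

Lemma n_gt0 : (0 : R) < n%:R.
Proof. by rewrite ltr0n. Qed.

Lemma sum_delta (F : 'I_k -> R) i : \sum_l F l * (l == i)%:R = F i.
Proof.
rewrite (bigD1 i) //= eqxx mulr1 big1 ?addr0 //.
by move=> l /negbTE ->; rewrite mulr0.
Qed.

Lemma sum_deltaC (F : 'I_k -> R) i : \sum_l F l * (i == l)%:R = F i.
Proof. by rewrite -(sum_delta F i); apply: eq_bigr => l _; rewrite eq_sym. Qed.

Lemma card_alpha l : (#|[set v | c v == l]|%:R : R) = \sum_w (c w == l)%:R.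
Proof.
rewrite -sum1dep_card natr_sum big_mkcond /=.
by apply: eq_bigr => w _; case: (c w == l).
Qed.

Lemma group (F : 'I_k -> R) :
  \sum_(w : 'I_n) F (c w) = n%:R * \sum_l a l * F l.
Proof.
rewrite mulr_sumr.
have -> : \sum_l n%:R * (a l * F l) = \sum_l \sum_w F l * (c w == l)%:R.
  apply: eq_bigr => l _; rewrite /alpha mulrA mulrCA divff ?n_neq0 // mulr1.
  by rewrite card_alpha mulr_suml; apply: eq_bigr => w _; rewrite mulrC.
rewrite [RHS]exchange_big /=; apply: eq_bigr => w _.
by rewrite sum_deltaC.
Qed.

Lemma sum_alpha : \sum_l a l = 1.
Proof.
have := group (fun _ => 1).
rewrite sumr_const card_ord.
under eq_bigr do rewrite mulr1.
move=> /eqP; rewrite -mulr_natl mulr1 eq_sym -subr_eq0 -{2}(mulr1 n%:R) -mulrBr.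
rewrite mulf_eq0 (negbTE n_neq0) /= subr_eq0 => /eqP //.
Qed.

Lemma alpha_ge0 l : 0 <= a l.
Proof. by rewrite /alpha divr_ge0 // ler0n. Qed.

Lemma alpha_le1 l : a l <= 1.
Proof.
rewrite -sum_alpha (bigD1 l) //= lerDl sumr_ge0 // => j _; exact: alpha_ge0.
Qed.

Lemma gamma_ge0 : 0 <= gamma c :> R.
Proof. by rewrite /gamma sumr_ge0 // => l _; rewrite sqr_ge0. Qed.

Lemma alpha2_le_gamma l : a l ^+ 2 <= gamma c.
Proof.
rewrite /gamma (bigD1 l) //= lerDl sumr_ge0 // => j _; exact: sqr_ge0.
Qed.

Lemma gamma_le1 : gamma c <= 1 :> R.
Proof.
rewrite -sum_alpha /gamma; apply: ler_sum => l _.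
have := alpha_ge0 l; have := alpha_le1 l; nra.
Qed.

Lemma alpha_le_sqrt l : a l <= Num.sqrt (gamma c).
Proof.
by rewrite -(ger0_norm (alpha_ge0 l)) -sqrtr_sqr ler_sqrt ?gamma_ge0 ?alpha2_le_gamma.
Qed.

End Basic.

Section Engine.
Variable R : realType.
Variables n k : nat.
Hypothesis hn : (0 < n)%N.
Variable S : finType.
Variable out : 'I_n -> S -> 'I_k.
Variable P : 'I_n -> 'I_k -> R.
Hypothesis law : forall v (f : 'I_k -> R),
  Eunif (fun s => f (out v s)) = \sum_l P v l * f l.
Hypothesis P0 : forall v l, 0 <= P v l.
Hypothesis P1 : forall v, \sum_l P v l = 1.

Variable h : 'I_n -> 'I_k -> R.
Definition mv v := \sum_l P v l * h v l.
Definition Vv v := \sum_l P v l * (h v l - mv v) ^+ 2.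

Lemma S_gt0 : (0 < #|S|)%N.
Proof.
have := law (Ordinal hn) (fun _ => 1).
under eq_bigr do rewrite mulr1.
rewrite P1 /Eunif; case: #|S| => // ; rewrite invr0 mulr0 => /eqP.
by rewrite eq_sym oner_eq0.
Qed.

Lemma mean_engine :
  Eunif (fun om : {ffun 'I_n -> S} => \sum_v h v (out v (om v))) = \sum_v mv v.
Proof.
rewrite Eunif_sum; apply: eq_bigr => v _.
rewrite (@Eunif_marg R n S v (fun s => h v (out v s)) S_gt0).
by rewrite (law v (h v)).
Qed.

Lemma mgf_engine (lam B : R) : 0 <= B -> B < 3 ->
  (forall v l, lam * (h v l - mv v) <= B) ->
  Eunif (fun om : {ffun 'I_n -> S} => expR (lam * \sum_v h v (out v (om v)))) <=
  expR (lam * \sum_v mv v + lam ^+ 2 * (\sum_v Vv v) / (2 * (1 - B / 3))).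
Proof.
move=> B0 B3 hB.
have -> : (fun om : {ffun 'I_n -> S} => expR (lam * \sum_v h v (out v (om v)))) =
          (fun om => \prod_v expR (lam * h v (out v (om v)))).
  by apply: funext => om; rewrite mulr_sumr expR_sum.
rewrite (@Eunif_prod R n S (fun v s => expR (lam * h v (out v s)))).
have -> : lam * \sum_v mv v + lam ^+ 2 * (\sum_v Vv v) / (2 * (1 - B / 3)) =
   \sum_v (lam * mv v + lam ^+ 2 * Vv v / (2 * (1 - B / 3))).
  by rewrite big_split /= -mulr_sumr -mulr_suml -mulr_sumr.
rewrite expR_sum; apply: ler_prod => v _; apply/andP; split.
  by rewrite /Eunif divr_ge0 // sumr_ge0 // => s _; rewrite expR_ge0.
rewrite (law v (fun l => expR (lam * h v l))).
exact: mgf_dist.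
Qed.


Variable step : {ffun 'I_n -> S} -> config n k.
Variable E : (config n k -> R) -> R.
Hypothesis hE : forall f, E f = Eunif (fun om => f (step om)).
Variable X : config n k -> R.

Lemma quad_le (lam SV s D : R) : SV <= s -> 0 < 1 - D / 3 ->
  lam ^+ 2 * SV / (2 * (1 - D / 3)) <= (lam ^+ 2 * s / 2) / (1 - D / 3).
Proof.
move=> hs hK.
rewrite invfM mulrA ler_wpM2r ?invr_ge0 ?(ltW hK) //.
have := sqr_ge0 lam; nra.
Qed.

Lemma bern_two (D s : R) :
  (forall om, X (step om) = \sum_v h v (out v (om v))) -> 0 <= D ->
  (forall v l, `|h v l - mv v| <= D) -> \sum_v Vv v <= s ->
  bernstein E (fun c' => X c' - E X) D s.
Proof.
move=> hX D0 hD hV lam hlam.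
have EX : E X = \sum_v mv v.
  rewrite hE -mean_engine; congr Eunif; apply: funext => om; exact: hX.
rewrite hE EX; set M := \sum_v mv v.
have -> : (fun om => expR (lam * (X (step om) - M))) =
   (fun om => expR (lam * \sum_v h v (out v (om v))) * expR (- (lam * M))).
  apply: funext => om; rewrite hX -expRD; congr expR; ring.
rewrite EunifZ.
have B0 : 0 <= `|lam| * D by rewrite mulr_ge0.
have hB : forall v l, lam * (h v l - mv v) <= `|lam| * D.
  move=> v l; apply: le_trans (ler_norm _) _; rewrite normrM.
  by apply: ler_wpM2l.
apply: (le_trans (ler_wpM2r (expR_ge0 _) (@mgf_engine lam _ B0 hlam hB))).
rewrite -expRD ler_expR -/M.
rewrite addrAC subrr add0r.
apply: quad_le => //; lra.
Qed.

Lemma bern_one (D s : R) :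
  (forall om, X (step om) <= \sum_v h v (out v (om v))) ->
  \sum_v mv v <= 0 -> 0 <= D ->
  (forall v l, h v l - mv v <= D) -> \sum_v Vv v <= s ->
  bernstein1 E X D s.
Proof.
move=> hX hM D0 hD hV lam lam0 hlam.
rewrite hE.
have B0 : 0 <= lam * D by rewrite mulr_ge0.
have hB : forall v l, lam * (h v l - mv v) <= lam * D.
  by move=> v l; apply: ler_wpM2l.
have H1 : Eunif (fun om => expR (lam * X (step om))) <=
    Eunif (fun om : {ffun 'I_n -> S} => expR (lam * \sum_v h v (out v (om v)))).
  by apply: Eunif_le => om; rewrite ler_expR; apply: ler_wpM2l.
apply: (le_trans H1); apply: (le_trans (@mgf_engine lam _ B0 hlam hB)).
rewrite ler_expR.
have : lam * \sum_v mv v <= 0 by rewrite mulr_ge0_le0.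
have := quad_le lam (\sum_v Vv v) s (lam * D) hV ltac:(lra).
lra.
Qed.

End Engine.

Section Laws.
Variable R : realType.
Variables n k : nat.
Hypothesis hn : (0 < n)%N.
Variable c : config n k.

Local Notation a := (@alpha R n k c).
Local Notation g := (@gamma R n k c).

Definition out3 (v : 'I_n) (s : 'I_n * 'I_n * 'I_n) : 'I_k :=
  let: (w1, w2, w3) := s in if c w1 == c w2 then c w1 else c w3.
Definition out2 (v : 'I_n) (s : 'I_n * 'I_n) : 'I_k :=
  let: (w1, w2) := s in if c w1 == c w2 then c w1 else c v.
Definition P3 (v : 'I_n) (l : 'I_k) : R := a l ^+ 2 + (1 - g) * a l.
Definition P2 (v : 'I_n) (l : 'I_k) : R := a l ^+ 2 + (1 - g) * (l == c v)%:R.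

Lemma sumj_if i (x y : R) :
  \sum_j a j * (if i == j then x else y) = a i * x + (1 - a i) * y.
Proof.
rewrite (bigD1 i) //= eqxx.
have -> : \sum_(j | j != i) a j * (if i == j then x else y) =
          \sum_(j | j != i) a j * y.
  by apply: eq_bigr => j /negbTE; rewrite eq_sym => ->.
rewrite -mulr_suml.
have := @sum_alpha R n k hn c; rewrite (bigD1 i) //= => H.
have -> : \sum_(j | j != i) a j = 1 - a i by rewrite -H addrAC subrr add0r.
by [].
Qed.

Lemma law3 v (f : 'I_k -> R) :
  Eunif (fun s => f (out3 v s)) = \sum_l P3 v l * f l.
Proof.
rewrite /Eunif !card_prod !card_ord.
have -> : \sum_(s : 'I_n * 'I_n * 'I_n) f (out3 v s) =
   \sum_w1 \sum_w2 \sum_w3 f (if c w1 == c w2 then c w1 else c w3).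
  rewrite pair_bigA [RHS]pair_bigA /=; apply: eq_bigr => -[[w1 w2] w3] _ //.
under eq_bigr => w1 _ do under eq_bigr => w2 _ do
  rewrite (@group R n k hn c (fun l => f (if c w1 == c w2 then c w1 else l))).
under eq_bigr => w1 _ do
  rewrite (@group R n k hn c (fun j => n%:R * \sum_l a l * f (if c w1 == j then c w1 else l))).
rewrite (@group R n k hn c (fun i => n%:R * \sum_j a j *
   (n%:R * \sum_l a l * f (if i == j then i else l)))).
set A := \sum_l a l * f l.
have inner i j : \sum_l a l * f (if i == j then i else l) = if i == j then f i else A.
  case: (i == j) => //; rewrite -mulr_suml (@sum_alpha R n k hn c) mul1r //.
under eq_bigr => i _ do under eq_bigr => j _ do rewrite inner (fun_if (fun x => n%:R * x)).
under eq_bigr => i _ do rewrite sumj_if.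
have e i : a i * (n%:R * (a i * (n%:R * f i) + (1 - a i) * (n%:R * A))) =
  n%:R ^+ 2 * (a i ^+ 2 * f i) + n%:R ^+ 2 * A * a i - n%:R ^+ 2 * A * a i ^+ 2 by ring.
rewrite (eq_bigr _ (fun i _ => e i)) !big_split /= sumrN -!mulr_sumr (@sum_alpha R n k hn c).
have -> : \sum_l P3 v l * f l = \sum_l a l ^+ 2 * f l + (1 - g) * A.
  rewrite /A mulr_sumr -big_split /=; apply: eq_bigr => l _; rewrite /P3; ring.
rewrite /gamma -/A natrM natrM.
field; rewrite n_neq0 //.
Qed.

Lemma law2 v (f : 'I_k -> R) :
  Eunif (fun s => f (out2 v s)) = \sum_l P2 v l * f l.
Proof.
rewrite /Eunif !card_prod !card_ord.
have -> : \sum_(s : 'I_n * 'I_n) f (out2 v s) =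
   \sum_w1 \sum_w2 f (if c w1 == c w2 then c w1 else c v).
  by rewrite [RHS]pair_bigA /=; apply: eq_bigr => -[w1 w2] _.
under eq_bigr => w1 _ do
  rewrite (@group R n k hn c (fun j => f (if c w1 == j then c w1 else c v))).
rewrite (@group R n k hn c (fun i => n%:R * \sum_j a j * f (if i == j then i else c v))).
under eq_bigr => i _ do under eq_bigr => j _ do rewrite (fun_if f).
under eq_bigr => i _ do rewrite sumj_if.
have e i : a i * (n%:R * (a i * f i + (1 - a i) * f (c v))) =
  n%:R * (a i ^+ 2 * f i) + n%:R * f (c v) * a i - n%:R * f (c v) * a i ^+ 2 by ring.
rewrite (eq_bigr _ (fun i _ => e i)) !big_split /= sumrN -!mulr_sumr (@sum_alpha R n k hn c).
have -> : \sum_l P2 v l * f l = \sum_l a l ^+ 2 * f l + (1 - g) * f (c v).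
  rewrite -(@sum_delta R k f (c v)) mulr_sumr -big_split /=; apply: eq_bigr => l _.
  rewrite /P2; ring.
rewrite /gamma natrM.
field; rewrite n_neq0 //.
Qed.

End Laws.

Lemma key31 (R : realType) (a g : R) : 0 <= a -> a <= 1 -> a ^+ 2 <= g -> g <= 1 ->
  (a ^+ 2 + (1 - g) * a) - (a ^+ 2 + (1 - g) * a) ^+ 2 <= a.
Proof.
move=> a0 a1 ag g1.
set x := 1 + a - g.
have -> : a ^+ 2 + (1 - g) * a = a * x by rewrite /x; ring.
case: (leP a g) => h.
  have x1 : x <= 1 by rewrite /x; lra.
  have x0 : 0 <= x by rewrite /x; nra.
  have : a * x <= a by nra.
  have := sqr_ge0 (a * x); lra.
have x1 : 1 <= x by rewrite /x; lra.
have : x - 1 <= a * x ^+ 2.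
  have : x - 1 <= a by rewrite /x; nra.
  have hx2 : 1 <= x ^+ 2 by nra.
  have : a <= a * x ^+ 2 by nra.
  lra.
move=> H; have : a * (x - 1 - a * x ^+ 2) <= 0 by nra.
have -> : a * x - (a * x) ^+ 2 = a + a * (x - 1 - a * x ^+ 2) by ring.
lra.
Qed.

Section Parts.
Variable R : realType.
Variables n k : nat.
Hypothesis hn : (0 < n)%N.
Variable c : config n k.

Local Notation a := (@alpha R n k c).
Local Notation g := (@gamma R n k c).
Local Notation N := (n%:R : R).

Lemma Ngt0 : 0 < N. Proof. exact: n_gt0. Qed.
Lemma Nneq0 : N != 0. Proof. exact: n_neq0. Qed.
Lemma sa : \sum_l a l = 1. Proof. exact: sum_alpha. Qed.
Lemma a0 l : 0 <= a l. Proof. exact: alpha_ge0. Qed.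
Lemma a1 l : a l <= 1. Proof. exact: alpha_le1. Qed.
Lemma g0 : 0 <= g. Proof. exact: gamma_ge0. Qed.
Lemma g1 : g <= 1. Proof. exact: gamma_le1. Qed.
Lemma a2g l : a l ^+ 2 <= g. Proof. exact: alpha2_le_gamma. Qed.
Lemma asq l : a l <= Num.sqrt g. Proof. exact: alpha_le_sqrt. Qed.

Lemma alpha_E (c' : config n k) i :
  alpha c' i = \sum_v (c' v == i)%:R / N :> R.
Proof. by rewrite /alpha card_alpha mulr_suml. Qed.

Lemma P3_ge0 v l : 0 <= P3 R n k c v l.
Proof.
rewrite /P3 addr_ge0 ?sqr_ge0 // mulr_ge0 ?a0 //; have := g1; lra.
Qed.

Lemma P3_sum1 v : \sum_l P3 R n k c v l = 1.
Proof.
rewrite /P3 big_split /= -mulr_sumr sa -/(gamma c); ring.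
Qed.

Lemma P2_ge0 v l : 0 <= P2 R n k c v l.
Proof.
rewrite /P2 addr_ge0 ?sqr_ge0 // mulr_ge0 ?ler0n //; have := g1; lra.
Qed.

Lemma P2_sum1 v : \sum_l P2 R n k c v l = 1.
Proof.
rewrite /P2 big_split /= -mulr_sumr -/(gamma c).
have -> : \sum_l ((l == c v)%:R : R) = 1.
  by have := @sum_delta R k (fun _ => 1 : R) (c v); under eq_bigr do rewrite mul1r.
ring.
Qed.

Lemma P_le1 (P : 'I_k -> R) l : (forall l, 0 <= P l) -> \sum_l P l = 1 -> P l <= 1.
Proof.
move=> P0 P1; rewrite -P1 (bigD1 l) //= lerDl sumr_ge0 //.
Qed.

Lemma sum_ind (F : 'I_k -> R) i (x : R) :
  \sum_l F l * ((l == i)%:R * x) = F i * x.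
Proof.
under eq_bigr do rewrite mulrA.
by rewrite -mulr_suml (@sum_delta R k).
Qed.

Lemma norm_divN (x y : R) : `|x| <= y -> `|x / N| <= y / N.
Proof.
move=> h; have hN : 0 <= N^-1 by rewrite invr_ge0 ltW // Ngt0.
rewrite normrM (ger0_norm hN) ler_wpM2r //.

Qed.

Lemma Ninv_ge0 : 0 <= N^-1.
Proof. by rewrite invr_ge0 ler0n. Qed.

Lemma ind2 (b : bool) : ((b%:R : R) / N) ^+ 2 = b%:R * (N ^+ 2)^-1.
Proof. by case: b => /=; field; exact: Nneq0. Qed.

Lemma sum_constN (x : R) : \sum_(v < n) x = N * x.
Proof. by rewrite sumr_const card_ord mulr_natl. Qed.

Lemma part31 i :
  bernstein (E3 (R:=R) c)
    (fun c' => alpha c' i - E3 c (fun c'' => alpha c'' i))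
    (1 / N) (alpha c i / N).
Proof.
pose h := fun (v : 'I_n) (l : 'I_k) => (l == i)%:R / N.
have hm v : mv R n k (P3 R n k c) h v = P3 R n k c v i / N.
  by rewrite /mv /h sum_ind.
apply: (@bern_two R n k hn _ (out3 n k c) (P3 R n k c) (law3 R n k hn c)
          P3_ge0 P3_sum1 h (step3 c) (E3 c) (fun f => erefl) (fun c' => alpha c' i)).
- by move=> om; rewrite alpha_E; apply: eq_bigr => v _; rewrite /h ffunE.
- by rewrite divr_ge0 // ler0n.
- move=> v l; rewrite hm /h -mulrBl; apply: norm_divN.
  have := P3_ge0 v i; have := @P_le1 (P3 R n k c v) i (P3_ge0 v) (P3_sum1 v).
  by case: (l == i) => /= ? ?; rewrite ler_norml; apply/andP; split; lra.
- have hV v : Vv R n k (P3 R n k c) h v =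
      P3 R n k c v i / N ^+ 2 - (P3 R n k c v i / N) ^+ 2.
    rewrite /Vv -/(mv R n k (P3 R n k c) h v).
    rewrite /mv (var_eq _ _ _ _ (P3_sum1 v)) -/(mv R n k (P3 R n k c) h v) hm.
    by rewrite /h; under eq_bigr do rewrite ind2; rewrite sum_ind.
  under eq_bigr do rewrite hV.
  rewrite /P3 sum_constN.
  set q := a i ^+ 2 + (1 - g) * a i.
  have -> : N * (q / N ^+ 2 - (q / N) ^+ 2) = (q - q ^+ 2) / N.
    by field; exact: Nneq0.
  rewrite ler_wpM2r ?Ninv_ge0 //.
  exact: (@key31 R (a i) g (a0 i) (a1 i) (a2g i) g1).
Qed.

Lemma delta_E (c' : config n k) i j :
  delta c' i j = \sum_v ((c' v == i)%:R / N - (c' v == j)%:R / N) :> R.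
Proof. by rewrite /delta !alpha_E sumrB. Qed.

Lemma ind_diff2 (i j l : 'I_k) : i != j ->
  ((l == i)%:R / N - (l == j)%:R / N) ^+ 2 =
  (l == i)%:R * (N ^+ 2)^-1 + (l == j)%:R * (N ^+ 2)^-1 :> R.
Proof.
move=> ij; case: (eqVneq l i) => [->|li].
  by rewrite (negbTE ij) /=; field; exact: Nneq0.
by case: (l == j) => /=; field; exact: Nneq0.
Qed.

Lemma mv_diff (P : 'I_n -> 'I_k -> R) i j v :
  mv R n k P (fun _ l => (l == i)%:R / N - (l == j)%:R / N) v =
  P v i / N - P v j / N.
Proof.
rewrite /mv; under eq_bigr do rewrite mulrBr.
by rewrite sumrB !sum_ind.
Qed.

Lemma abs_diff_bound (P : 'I_k -> R) i j l : i != j ->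
  (forall l, 0 <= P l) -> \sum_l P l = 1 ->
  `|(l == i)%:R / N - (l == j)%:R / N - (P i / N - P j / N)| <= 2 / N.
Proof.
move=> ij P0 P1.
have hi := P0 i; have hj := P0 j.
have hij : P i + P j <= 1.
  rewrite -P1 (bigD1 i) //= (bigD1 j) 1?eq_sym //= addrA lerDl sumr_ge0 //.
have -> : (l == i)%:R / N - (l == j)%:R / N - (P i / N - P j / N) =
   ((l == i)%:R - (l == j)%:R - (P i - P j)) / N by field; exact: Nneq0.
apply: norm_divN; rewrite ler_norml.
case: (eqVneq l i) => [->|li]; first by rewrite (negbTE ij) /=; apply/andP; split; lra.
by case: (l == j) => /=; apply/andP; split; lra.
Qed.

Lemma part32 i j : i != j ->
  bernstein (E3 (R:=R) c)
    (fun c' => delta c' i j - E3 c (fun c'' => delta c'' i j))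
    (2 / N) (2 / N * (alpha c i + alpha c j)).
Proof.
move=> ij.
pose h := fun (v : 'I_n) (l : 'I_k) => (l == i)%:R / N - (l == j)%:R / N.
apply: (@bern_two R n k hn _ (out3 n k c) (P3 R n k c) (law3 R n k hn c)
          P3_ge0 P3_sum1 h (step3 c) (E3 c) (fun f => erefl) (fun c' => delta c' i j)).
- by move=> om; rewrite delta_E; apply: eq_bigr => v _; rewrite /h ffunE.
- by rewrite divr_ge0 // ler0n.
- move=> v l; rewrite /h mv_diff; exact: abs_diff_bound ij (P3_ge0 v) (P3_sum1 v).
- have hV v : Vv R n k (P3 R n k c) h v <=
      (P3 R n k c v i + P3 R n k c v j) / N ^+ 2.
    rewrite /Vv /mv.
    apply: (le_trans (var_le _ _ _ _ 0 (P3_sum1 v))).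
    under eq_bigr do rewrite subr0 /h ind_diff2 //.
    under eq_bigr do rewrite mulrDr.
    rewrite big_split /= !sum_ind; lra.
  apply: (le_trans (ler_sum _ (fun v _ => hV v))).
  rewrite /P3 sum_constN.
  have -> : N * ((a i ^+ 2 + (1 - g) * a i + (a j ^+ 2 + (1 - g) * a j)) / N ^+ 2)
     = (a i ^+ 2 + (1 - g) * a i + (a j ^+ 2 + (1 - g) * a j)) / N.
    by field; exact: Nneq0.
  rewrite mulrAC ler_wpM2r ?Ninv_ge0 //.
  have := a0 i; have := a1 i; have := a0 j; have := a1 j; have := g0; have := g1.
  nra.
Qed.

Local Notation T := (\sum_l a l ^+ 3).
Local Notation F := (\sum_l a l ^+ 4).

Lemma poly_sum (x1 x2 x3 x4 : R) :
  \sum_l (x1 * a l + x2 * a l ^+ 2 + x3 * a l ^+ 3 + x4 * a l ^+ 4) =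
  x1 + x2 * g + x3 * T + x4 * F.
Proof. by rewrite !big_split /= -!mulr_sumr sa mulr1. Qed.

Lemma T_ge : g ^+ 2 <= T.
Proof.
have : 0 <= \sum_l a l * (a l - g) ^+ 2.
  by apply: sumr_ge0 => l _; rewrite mulr_ge0 ?a0 ?sqr_ge0.
have e l : a l * (a l - g) ^+ 2 =
  g ^+ 2 * a l + (- 2 * g) * a l ^+ 2 + 1 * a l ^+ 3 + 0 * a l ^+ 4 by ring.
rewrite (eq_bigr _ (fun l _ => e l)) poly_sum; lra.
Qed.

Lemma T_le : T <= g * Num.sqrt g.
Proof.
rewrite /gamma mulr_suml; apply: ler_sum => l _.
by rewrite exprSr ler_wpM2l ?sqr_ge0 ?asq.
Qed.

Lemma F_le : F <= g ^+ 2.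
Proof.
rewrite [X in _ <= X]expr2 {2}/gamma mulr_sumr; apply: ler_sum => l _.
by rewrite (_ : 4 = 2 + 2)%N // exprD mulrC ler_wpM2r ?sqr_ge0 ?a2g.
Qed.

Lemma gamma_lin (c' : config n k) :
  g - gamma c' <= \sum_v 2 / N * (g - a (c' v)).
Proof.
have H : 0 <= \sum_l (alpha c' l - a l) ^+ 2 by apply: sumr_ge0 => l _; exact: sqr_ge0.
have e l : (alpha c' l - a l) ^+ 2 = alpha c' l ^+ 2 - 2 * (a l * alpha c' l) + a l ^+ 2 by ring.
rewrite (eq_bigr _ (fun l _ => e l)) big_split sumrB /= -mulr_sumr in H.
have S1 : \sum_l a l * alpha c' l = \sum_v a (c' v) / N.
  under eq_bigr => l _ do rewrite (alpha_E c' l) mulr_sumr.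
  rewrite exchange_big /=; apply: eq_bigr => v _.
  under eq_bigr do rewrite mulrA.
  by rewrite -mulr_suml sum_deltaC.
have -> : \sum_v 2 / N * (g - a (c' v)) = 2 * g - 2 * \sum_v a (c' v) / N.
  under eq_bigr do rewrite mulrBr.
  rewrite sumrB sum_constN -mulr_sumr -mulr_suml; field; exact: Nneq0.
move: H; rewrite S1 -/(gamma c') -/(gamma c).
rewrite -mulr_suml; lra.
Qed.

Lemma sum_Pa_le (P : 'I_k -> R) : (forall l, 0 <= P l) -> \sum_l P l = 1 ->
  \sum_l P l * a l <= Num.sqrt g.
Proof.
move=> P0 P1; rewrite -[X in _ <= X]mul1r -P1 mulr_suml.
by apply: ler_sum => l _; rewrite ler_wpM2l ?asq.
Qed.

Lemma part33 :
  bernstein1 (E3 (R:=R) c) (fun c' => g - gamma c')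
    (2 * Num.sqrt g / N) (4 / N * (g * Num.sqrt g)).
Proof.
pose h := fun (v : 'I_n) (l : 'I_k) => 2 / N * (g - a l).
have hm v : mv R n k (P3 R n k c) h v = 2 / N * (g - (T + (1 - g) * g)).
  rewrite /mv /h.
  have e l : P3 R n k c v l * (2 / N * (g - a l)) =
    2 / N * g * P3 R n k c v l - 2 / N * (0 * a l + (1 - g) * a l ^+ 2 + 1 * a l ^+ 3 + 0 * a l ^+ 4)
    by rewrite /P3; ring.
  rewrite (eq_bigr _ (fun l _ => e l)) sumrB -!mulr_sumr P3_sum1 poly_sum; ring.
have Tg := T_ge; have Tl := T_le; have Fl := F_le; have G0 := g0; have G1 := g1.
have sq0 : 0 <= Num.sqrt g by exact: sqrtr_ge0.
apply: (@bern_one R n k _ (out3 n k c) (P3 R n k c) (law3 R n k hn c)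
          P3_ge0 P3_sum1 h (step3 c) (E3 c) (fun f => erefl) (fun c' => g - gamma c')).
- move=> om; apply: le_trans (gamma_lin _) _.
  by rewrite le_eqVlt; apply/orP; left; apply/eqP; apply: eq_bigr => v _; rewrite /h ffunE.
- under eq_bigr do rewrite hm.
  rewrite sum_constN mulrA mulrCA divff ?Nneq0 // mulr1.
  nra.
- by rewrite divr_ge0 ?ler0n // mulr_ge0.
- move=> v l; rewrite hm /h.
  have -> : 2 / N * (g - a l) - 2 / N * (g - (T + (1 - g) * g)) =
            (2 * (T + (1 - g) * g - a l)) / N by field; exact: Nneq0.
  rewrite ler_wpM2r ?Ninv_ge0 //.
  have gs : g = Num.sqrt g ^+ 2 by rewrite sqr_sqrtr.
  have := a0 l; set s := Num.sqrt g in sq0 Tl gs * => al.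
  have s1 : s <= 1 by nra.
  have sg : g <= s by nra.
  have : 0 <= (1 - g) * (s - g) by apply: mulr_ge0; lra.
  nra.
- have hV v : Vv R n k (P3 R n k c) h v <=
     4 / N ^+ 2 * ((1 - g) * g ^+ 2 + (g ^+ 2 - 2 * g * (1 - g)) * g + (1 - 3 * g) * T + 1 * F).
    rewrite /Vv /mv.
    apply: (le_trans (var_le _ _ _ _ 0 (P3_sum1 v))).
    have e l : P3 R n k c v l * (h v l - 0) ^+ 2 =
      4 / N ^+ 2 * ((1 - g) * g ^+ 2 * a l + (g ^+ 2 - 2 * g * (1 - g)) * a l ^+ 2
         + (1 - 3 * g) * a l ^+ 3 + 1 * a l ^+ 4).
      rewrite /P3 /h; field; exact: Nneq0.
    by rewrite (eq_bigr _ (fun l _ => e l)) -mulr_sumr poly_sum.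
  apply: (le_trans (ler_sum _ (fun v _ => hV v))).
  rewrite sum_constN.
  rewrite (_ : forall Z, N * (4 / N ^+ 2 * Z) = 4 * Z / N); last first.
    by move=> Z; field; exact: Nneq0.
  rewrite [in X in _ <= X]mulrAC ler_wpM2r ?Ninv_ge0 //.
  have : 0 <= g * (T - g ^+ 2) by rewrite mulr_ge0 // subr_ge0.
  nra.
Qed.

Lemma mv2 (H : 'I_k -> R) v :
  mv R n k (P2 R n k c) (fun _ l => H l) v = \sum_l a l ^+ 2 * H l + (1 - g) * H (c v).
Proof.
rewrite /mv /P2; under eq_bigr do rewrite mulrDl.
rewrite big_split /=; congr (_ + _).
rewrite -(@sum_delta R k H (c v)) mulr_sumr; apply: eq_bigr => l _; ring.
Qed.

Lemma V2le (H : 'I_k -> R) v :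
  Vv R n k (P2 R n k c) (fun _ l => H l) v <= \sum_l a l ^+ 2 * (H l - H (c v)) ^+ 2.
Proof.
rewrite /Vv /mv.
apply: (le_trans (var_le _ _ _ _ (H (c v)) (P2_sum1 v))).
rewrite /P2; under eq_bigr do rewrite mulrDl.
rewrite big_split /=.
have -> : \sum_l (1 - g) * (l == c v)%:R * (H l - H (c v)) ^+ 2 = 0.
  rewrite (eq_bigr (fun l => (1 - g) * (H l - H (c v)) ^+ 2 * (l == c v)%:R)).
    by rewrite (@sum_delta R k (fun l => (1 - g) * (H l - H (c v)) ^+ 2)) subrr expr0n /= mulr0.
  by move=> l _; ring.
by rewrite addr0.
Qed.

Lemma V2sum (H : 'I_k -> R) :
  \sum_v \sum_l a l ^+ 2 * (H l - H (c v)) ^+ 2 =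
  N * (\sum_l a l ^+ 2 * H l ^+ 2 - 2 * (\sum_l a l * H l) * (\sum_l a l ^+ 2 * H l)
       + g * \sum_l a l * H l ^+ 2).
Proof.
rewrite (@group R n k hn c (fun u => \sum_l a l ^+ 2 * (H l - H u) ^+ 2)).
congr (_ * _).
have e u : a u * \sum_l a l ^+ 2 * (H l - H u) ^+ 2 =
   a u * (\sum_l a l ^+ 2 * H l ^+ 2) - 2 * (\sum_l a l ^+ 2 * H l) * (a u * H u)
   + g * (a u * H u ^+ 2).
  have e2 l : a l ^+ 2 * (H l - H u) ^+ 2 =
     a l ^+ 2 * H l ^+ 2 - 2 * H u * (a l ^+ 2 * H l) + H u ^+ 2 * a l ^+ 2 by ring.
  rewrite (eq_bigr _ (fun l _ => e2 l)) !big_split /= sumrN -!mulr_sumr -/(gamma c).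
  ring.
rewrite (eq_bigr _ (fun u _ => e u)) !big_split /= sumrN -!mulr_sumr -mulr_suml sa.
ring.
Qed.

Lemma sumI1 (F' : 'I_k -> R) i : \sum_l F' l * ((l == i)%:R / N) = F' i / N.
Proof. exact: sum_ind. Qed.

Lemma sumI2 (F' : 'I_k -> R) i : \sum_l F' l * ((l == i)%:R / N) ^+ 2 = F' i * (N ^+ 2)^-1.
Proof. under eq_bigr do rewrite ind2. exact: sum_ind. Qed.

Lemma part21 i :
  bernstein (E2 (R:=R) c)
    (fun c' => alpha c' i - E2 c (fun c'' => alpha c'' i))
    (1 / N) (alpha c i * (alpha c i + gamma c) / N).
Proof.
pose H := fun (l : 'I_k) => (l == i)%:R / N.
pose h := fun (v : 'I_n) (l : 'I_k) => H l.
have hm v : mv R n k (P2 R n k c) h v = P2 R n k c v i / N.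
  by rewrite /mv /h /H sum_ind.
apply: (@bern_two R n k hn _ (out2 n k c) (P2 R n k c) (law2 R n k hn c)
          P2_ge0 P2_sum1 h (step2 c) (E2 c) (fun f => erefl) (fun c' => alpha c' i)).
- by move=> om; rewrite alpha_E; apply: eq_bigr => v _; rewrite /h /H ffunE.
- by rewrite divr_ge0 // ler0n.
- move=> v l; rewrite hm /h /H -mulrBl; apply: norm_divN.
  have := P2_ge0 v i; have := @P_le1 (P2 R n k c v) i (P2_ge0 v) (P2_sum1 v).
  by case: (l == i) => /= ? ?; rewrite ler_norml; apply/andP; split; lra.
- apply: (le_trans (ler_sum _ (fun v _ => V2le H v))).
  rewrite V2sum /H !sumI2 !sumI1.
  rewrite (_ : forall x y z : R, N * (x * (N ^+ 2)^-1 - 2 * (y / N) * (z / N) + g * (y * (N ^+ 2)^-1))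
              = (x - 2 * y * z + g * y) / N); last first.
    by move=> x y z; field; exact: Nneq0.
  rewrite ler_wpM2r ?Ninv_ge0 //.
  have := a0 i; have : 0 <= a i ^+ 3 by rewrite exprn_ge0 ?a0.
  nra.
Qed.

Lemma sumD1 (F' : 'I_k -> R) i j :
  \sum_l F' l * ((l == i)%:R / N - (l == j)%:R / N) = F' i / N - F' j / N.
Proof. under eq_bigr do rewrite mulrBr. by rewrite sumrB !sum_ind. Qed.

Lemma sumD2 (F' : 'I_k -> R) i j : i != j ->
  \sum_l F' l * ((l == i)%:R / N - (l == j)%:R / N) ^+ 2 =
  F' i * (N ^+ 2)^-1 + F' j * (N ^+ 2)^-1.
Proof.
move=> ij; under eq_bigr do rewrite ind_diff2 // mulrDr.
by rewrite big_split /= !sum_ind.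
Qed.

Lemma part22 i j : i != j ->
  bernstein (E2 (R:=R) c)
    (fun c' => delta c' i j - E2 c (fun c'' => delta c'' i j))
    (2 / N) (1 / N * (alpha c i + alpha c j) * (alpha c i + alpha c j + gamma c)).
Proof.
move=> ij.
pose H := fun (l : 'I_k) => (l == i)%:R / N - (l == j)%:R / N.
pose h := fun (v : 'I_n) (l : 'I_k) => H l.
apply: (@bern_two R n k hn _ (out2 n k c) (P2 R n k c) (law2 R n k hn c)
          P2_ge0 P2_sum1 h (step2 c) (E2 c) (fun f => erefl) (fun c' => delta c' i j)).
- by move=> om; rewrite delta_E; apply: eq_bigr => v _; rewrite /h /H ffunE.
- by rewrite divr_ge0 // ler0n.
- move=> v l; rewrite /h /H mv_diff; exact: abs_diff_bound ij (P2_ge0 v) (P2_sum1 v).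
- apply: (le_trans (ler_sum _ (fun v _ => V2le H v))).
  rewrite V2sum /H !sumD2 // !sumD1.
  rewrite (_ : forall x y z w : R, N * (x * (N ^+ 2)^-1 + y * (N ^+ 2)^-1 - 2 * (z / N - w / N) *
            (x / N - y / N) + g * (z * (N ^+ 2)^-1 + w * (N ^+ 2)^-1))
              = (x + y - 2 * (z - w) * (x - y) + g * (z + w)) / N); last first.
    by move=> x y z w; field; exact: Nneq0.
  rewrite mul1r (_ : N^-1 * (a i + a j) * (a i + a j + g) = ((a i + a j) * (a i + a j + g)) / N); last by ring.
  rewrite ler_wpM2r ?Ninv_ge0 //.
  have := a0 i; have := a0 j.
  have : 0 <= (a i - a j) ^+ 2 * (a i + a j) by rewrite mulr_ge0 ?sqr_ge0 ?addr_ge0 ?a0.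
  nra.
Qed.

Lemma psum (e : 'I_k -> R) (x0 x1 x2 x3 x4 : R) :
  (forall l, e l = x0 * (x1 * a l + x2 * a l ^+ 2 + x3 * a l ^+ 3 + x4 * a l ^+ 4)) ->
  \sum_l e l = x0 * (x1 + x2 * g + x3 * T + x4 * F).
Proof. by move=> he; rewrite (eq_bigr _ (fun l _ => he l)) -mulr_sumr poly_sum. Qed.

Lemma part23 :
  bernstein1 (E2 (R:=R) c) (fun c' => g - gamma c')
    (2 * Num.sqrt g / N) (8 / N * g ^+ 2).
Proof.
pose H := fun (l : 'I_k) => 2 / N * (g - a l).
pose h := fun (v : 'I_n) (l : 'I_k) => H l.
have Tg := T_ge; have Tl := T_le; have Fl := F_le; have G0 := g0; have G1 := g1.
have sq0 : 0 <= Num.sqrt g by exact: sqrtr_ge0.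
have sH : \sum_l a l * H l = 2 / N * (g + (-1) * g + 0 * T + 0 * F).
  by apply: psum => l; rewrite /H; ring.
have sH0 : \sum_l a l * H l = 0 by rewrite sH; ring.
apply: (@bern_one R n k _ (out2 n k c) (P2 R n k c) (law2 R n k hn c)
          P2_ge0 P2_sum1 h (step2 c) (E2 c) (fun f => erefl) (fun c' => g - gamma c')).
- move=> om; apply: le_trans (gamma_lin _) _.
  by rewrite le_eqVlt; apply/orP; left; apply/eqP; apply: eq_bigr => v _; rewrite /h /H ffunE.
- rewrite /h; under eq_bigr do rewrite mv2.
  rewrite big_split /= sum_constN -mulr_sumr (@group R n k hn c H) sH0 !mulr0 addr0.
  have -> : \sum_l a l ^+ 2 * H l = 2 / N * (0 + g * g + (-1) * T + 0 * F).
    by apply: psum => l; rewrite /H; ring.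
  rewrite mulrA mulrCA divff ?Nneq0 // mulr1; nra.
- by rewrite divr_ge0 ?ler0n // mulr_ge0.
- move=> v l.
  have -> : mv R n k (P2 R n k c) h v = 2 / N * (g - \sum_l P2 R n k c v l * a l).
    rewrite /mv /h /H.
    have e l' : P2 R n k c v l' * (2 / N * (g - a l')) =
       2 / N * g * P2 R n k c v l' - 2 / N * (P2 R n k c v l' * a l') by ring.
    by rewrite (eq_bigr _ (fun l _ => e l)) sumrB -!mulr_sumr P2_sum1 mulr1 mulrBr.
  have hP := @sum_Pa_le (P2 R n k c v) (P2_ge0 v) (P2_sum1 v).
  rewrite /h /H -mulrBr mulrAC ler_wpM2r ?Ninv_ge0 //.
  have := a0 l; nra.
- apply: (le_trans (ler_sum _ (fun v _ => V2le H v))).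
  rewrite V2sum sH0 mulr0 mul0r subr0.
  have -> : \sum_l a l ^+ 2 * H l ^+ 2 = 4 / N ^+ 2 * (0 + g ^+ 2 * g + (-2 * g) * T + 1 * F).
    by apply: psum => l; rewrite /H; field; exact: Nneq0.
  have -> : \sum_l a l * H l ^+ 2 = 4 / N ^+ 2 * (g ^+ 2 + (-2 * g) * g + 1 * T + 0 * F).
    by apply: psum => l; rewrite /H; field; exact: Nneq0.
  rewrite (_ : forall x y : R, N * (4 / N ^+ 2 * x + g * (4 / N ^+ 2 * y)) = 4 * (x + g * y) / N);
    last by move=> x y; field; exact: Nneq0.
  rewrite [in X in _ <= X]mulrAC ler_wpM2r ?Ninv_ge0 //.
  have : 0 <= g * T by rewrite mulr_ge0 // (le_trans _ Tg) // sqr_ge0.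
  nra.
Qed.

End Parts.

Theorem lemma4p2 (R : realType) (n k : nat) (hn : (0 < n)%N) (hk : (0 < k)%N)
  (hkn : (k <= n)%N) (c : config n k) :
  (* 3-Majority *)
  [/\ (forall i : 'I_k,
         bernstein (E3 (R:=R) c)
           (fun c' => alpha c' i - E3 c (fun c'' => alpha c'' i))
           (1 / n%:R) (alpha c i / n%:R)),
      (forall i j : 'I_k, i != j ->
         bernstein (E3 (R:=R) c)
           (fun c' => delta c' i j - E3 c (fun c'' => delta c'' i j))
           (2 / n%:R) (2 / n%:R * (alpha c i + alpha c j)))
    & bernstein1 (E3 (R:=R) c)
        (fun c' => gamma c - gamma c')
        (2 * Num.sqrt (gamma c) / n%:R)
        (4 / n%:R * (gamma c * Num.sqrt (gamma c)))]
  /\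
  (* 2-Choices *)
  [/\ (forall i : 'I_k,
         bernstein (E2 (R:=R) c)
           (fun c' => alpha c' i - E2 c (fun c'' => alpha c'' i))
           (1 / n%:R) (alpha c i * (alpha c i + gamma c) / n%:R)),
      (forall i j : 'I_k, i != j ->
         bernstein (E2 (R:=R) c)
           (fun c' => delta c' i j - E2 c (fun c'' => delta c'' i j))
           (2 / n%:R)
           (1 / n%:R * (alpha c i + alpha c j) * (alpha c i + alpha c j + gamma c)))
    & bernstein1 (E2 (R:=R) c)
        (fun c' => gamma c - gamma c')
        (2 * Num.sqrt (gamma c) / n%:R)
        (8 / n%:R * gamma c ^+ 2)].
Proof.
Proof.
split; split.
- move=> i; exact: part31.
- move=> i j ij; exact: part32.
- exact: part33.
- move=> i; exact: part21.
- move=> i j ij; exact: part22.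
- exact: part23.
Qed.
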